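(* Let $P\in\mathbb{R}^{p\times m}$, $Y_d\in\mathbb{R}^p$, plant $Y_k=PU_k+N_k$, $E_k=Y_d-Y_k$, $\bar U_k=-\Delta U_k$, $D_k=-\Delta N_k$ (so $E_{k+1}=E_k+P\bar U_k+D_k$), $\bar B=\begin{bmatrix}P\\0\end{bmatrix}$, $\bar L\in\mathbb{R}^{2p\times p}$, and consider the ESO $\hat{\bar X}_{k+1}=(\bar A-\bar L\bar C)\hat{\bar X}_k+\bar B\bar U_k+\bar LE_k$ with $\hat{\bar X}_k=\begin{bmatrix}\hat E_k\\\hat D_k\end{bmatrix}$, $\hat E_k,\hat D_k\in\mathbb{R}^p$. Let $K,H\in\mathbb{R}^{m\times p}$, $\bar K=\begin{bmatrix}K&H\end{bmatrix}$, and apply $\bar U_k=-\bar K\hat{\bar X}_k=-K\hat E_k-H\hat D_k$. Then $\begin{bmatrix}E_{k+1}\\\hat{\bar X}_{k+1}\end{bmatrix}=G\begin{bmatrix}E_{k}\\\hat{\bar X}_{k}\end{bmatrix}+\begin{bmatrix}I\\0\end{bmatrix}D_k$ with $G=\begin{bmatrix}I&-P\bar K\\\bar L&\bar A-\bar L\bar C-\bar B\bar K\end{bmatrix}$, and with the nonsingular $T=\begin{bmatrix}I&0\\-\bar C^{\top}&I\end{bmatrix}$ one has $TGT^{-1}=\begin{bmatrix}I-PK&-P\bar K\\0&\bar A-\bar L\bar C\end{bmatrix}$. Consequently the eigenvalues of $G$ are those of $I-PK$ together with those of $\bar A-\bar L\bar C$ (separation principle), so the feedback gain $K$ and the observer gain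 $\bar L$ can be designed separately, $K$ in the same way as for the pure state feedback $\bar U_k=-KE_k$.
   Context: $\mathbb{Z}_+=\{0,1,2,\dots\}$; $\Delta f_k=f_{k+1}-f_k$. $U_k\in\mathbb{R}^m$ input, $Y_k\in\mathbb{R}^p$ output, $(N_k)\subset\mathbb{R}^p$ a bounded uncertainty sequence. $\bar A=\begin{bmatrix}I_p&I_p\\0&I_p\end{bmatrix}$, $\bar C=\begin{bmatrix}I_p&0\end{bmatrix}$. *)

(* Defs.v *)
From HB Require Import structures.
From mathcomp Require Import all_boot all_order all_algebra.
Set Implicit Arguments. Unset Strict Implicit. Unset Printing Implicit Defensive.
Import Order.TTheory GRing.Theory Num.Theory.
Local Open Scope ring_scope.

Section Defs.
Variables (R : realFieldType) (p m : nat).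

Definition Abar : 'M[R]_(p + p) := block_mx 1%:M 1%:M 0 1%:M.
Definition Cbar : 'M[R]_(p, p + p) := row_mx 1%:M 0.
Definition Bbar (P : 'M[R]_(p, m)) : 'M[R]_(p + p, m) := col_mx P 0.
Definition Kbar (K H : 'M[R]_(m, p)) : 'M[R]_(m, p + p) := row_mx K H.

Definition Gmat (P : 'M[R]_(p, m)) (Lbar : 'M[R]_(p + p, p)) (K H : 'M[R]_(m, p))
  : 'M[R]_(p + (p + p)) :=
  block_mx 1%:M (- (P *m Kbar K H)) Lbar
           (Abar - Lbar *m Cbar - Bbar P *m Kbar K H).

Definition Tmat : 'M[R]_(p + (p + p)) := block_mx 1%:M 0 (- Cbar^T) 1%:M.
End Defs.

(* Main.v *)
Require Import Defs.
From HB Require Import structures.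
From mathcomp Require Import all_boot all_order all_algebra.
Import Order.TTheory GRing.Theory Num.Theory.
Local Open Scope ring_scope.

Lemma cp_sim (R : comNzRingType) n (T A B : 'M[R]_n) :
  \det T = 1 -> T *m A = B *m T -> char_poly A = char_poly B.
Proof.
move=> dT e.
have h : char_poly_mx B *m map_mx polyC T = map_mx polyC T *m char_poly_mx A.
  rewrite /char_poly_mx mulmxBl mulmxBr -!map_mxM e.
  by rewrite mul_scalar_mx mul_mx_scalar.
have := congr1 determinant h.
rewrite !det_mulmx det_map_mx dT rmorph1 mulr1 mul1r.
by rewrite /char_poly => ->.
Qed.

Lemma cp_ublock (R : comNzRingType) n1 n2 (A : 'M[R]_n1) (B : 'M[R]_(n1, n2)) (D : 'M[R]_n2) :
  char_poly (block_mx A B 0 D) = char_poly A * char_poly D.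
Proof.
rewrite /char_poly /char_poly_mx map_block_mx map_mx0 (scalar_mx_block n1 n2).
rewrite opp_block_mx add_block_mx oppr0 addr0 sub0r det_ublock //.
Qed.

Lemma CT (R : realFieldType) (p : nat) : (Cbar R p)^T = col_mx 1%:M 0.
Proof. by rewrite /Cbar tr_row_mx trmx1 trmx0. Qed.

Lemma CCT (R : realFieldType) (p : nat) : Cbar R p *m (Cbar R p)^T = 1%:M.
Proof. by rewrite CT /Cbar mul_row_col mul0mx addr0 mul1mx. Qed.

Lemma KCT (R : realFieldType) (p m : nat) (K H : 'M[R]_(m, p)) : Kbar K H *m (Cbar R p)^T = K.
Proof. by rewrite CT /Kbar mul_row_col mulmx0 addr0 mulmx1. Qed.

Lemma ACT (R : realFieldType) (p : nat) : Abar R p *m (Cbar R p)^T = (Cbar R p)^T.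
Proof. by rewrite CT /Abar mul_block_col !mulmx0 !addr0 mulmx1 mul0mx. Qed.

Lemma CTP (R : realFieldType) (p m : nat) (P : 'M[R]_(p, m)) : (Cbar R p)^T *m P = Bbar P.
Proof. by rewrite CT /Bbar mul_col_mx mul1mx mul0mx. Qed.

Lemma detT (R : realFieldType) (p : nat) : \det (Tmat R p) = 1.
Proof. by rewrite /Tmat det_lblock !det1 mulr1. Qed.

Lemma TG (R : realFieldType) (p m : nat) (P : 'M[R]_(p, m)) (Lbar : 'M[R]_(p + p, p)) (K H : 'M[R]_(m, p)) : Tmat R p *m Gmat P Lbar K H =
  block_mx (1%:M - P *m K) (- (P *m Kbar K H)) 0 (Abar R p - Lbar *m Cbar R p) *m Tmat R p.
Proof.
rewrite /Tmat /Gmat !mulmx_block !mul1mx !mulmx1 !mul0mx !mulmx0 !add0r !addr0.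
congr block_mx.
- by rewrite mulNmx mulmxN opprK -mulmxA KCT subrK.
- by rewrite mulmxN mulmxBl ACT -mulmxA CCT mulmx1 opprB addrC.
- by rewrite mulNmx mulmxN opprK mulmxA CTP addrC subrK.
Qed.

Theorem lemma4 (R : realFieldType) (p m : nat)
  (P : 'M[R]_(p, m)) (Yd : 'cV[R]_p) (Lbar : 'M[R]_(p + p, p))
  (K H : 'M[R]_(m, p)) :
  (* closed-loop dynamics along any trajectory of plant + ESO + control law *)
  (forall (U : nat -> 'cV[R]_m) (N Y E D : nat -> 'cV[R]_p)
          (Ub : nat -> 'cV[R]_m) (Xh : nat -> 'cV[R]_(p + p)),
      (exists M : R, forall k i, `|N k i 0| <= M) ->
      (forall k, Y k = P *m U k + N k) ->
      (forall k, E k = Yd - Y k) ->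
      (forall k, Ub k = - (U k.+1 - U k)) ->
      (forall k, D k = - (N k.+1 - N k)) ->
      (forall k, Xh k.+1 = (Abar R p - Lbar *m Cbar R p) *m Xh k
                           + Bbar P *m Ub k + Lbar *m E k) ->
      (forall k, Ub k = - (Kbar K H *m Xh k)) ->
      forall k, col_mx (E k.+1) (Xh k.+1)
                = Gmat P Lbar K H *m col_mx (E k) (Xh k)
                  + col_mx (1%:M : 'M[R]_p) (0 : 'M[R]_(p + p, p)) *m D k)
  /\ Tmat R p \in unitmx
  /\ Tmat R p *m Gmat P Lbar K H *m invmx (Tmat R p)
       = block_mx (1%:M - P *m K) (- (P *m Kbar K H))
                  0 (Abar R p - Lbar *m Cbar R p)
  /\ char_poly (Gmat P Lbar K H)
       = char_poly (1%:M - P *m K) * char_poly (Abar R p - Lbar *m Cbar R p)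
  /\ (forall a : R, eigenvalue (Gmat P Lbar K H) a <->
        eigenvalue (1%:M - P *m K) a \/ eigenvalue (Abar R p - Lbar *m Cbar R p) a).
Proof.
split.
  move=> U N Y E D Ub Xh _ hY hE hUb hD hX hK k.
  rewrite /Gmat mul_block_col [col_mx 1%:M 0 *m _]mul_col_mx mul1mx mul0mx add_col_mx addr0.
  congr col_mx.
    have hU : U k.+1 = U k - Ub k by rewrite hUb opprB subKr.
    rewrite !hE !hY hU hD hK opprK mulmxDr mul1mx mulNmx -mulmxA.
    rewrite !opprD !opprK !addrA.
    by rewrite [_ - N k - _]addrAC [_ - N k - N k.+1]addrAC subrK.
  by rewrite hX hK mulmxN !mulmxBl mulmxA addrC.
have uT : Tmat R p \in unitmx by rewrite unitmxE detT unitr1.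
have sim : Tmat R p *m Gmat P Lbar K H *m invmx (Tmat R p)
       = block_mx (1%:M - P *m K) (- (P *m Kbar K H)) 0 (Abar R p - Lbar *m Cbar R p).
  by rewrite TG mulmxK.
have cp : char_poly (Gmat P Lbar K H)
       = char_poly (1%:M - P *m K) * char_poly (Abar R p - Lbar *m Cbar R p).
  by rewrite -(@cp_ublock _ _ _ _ (- (P *m Kbar K H))); exact: (@cp_sim _ _ _ _ _ (detT R p) (TG R p m P Lbar K H)).
do 3 (split => //).
move=> a; rewrite !eigenvalue_root_char cp rootM.
by split => /orP.
Qed.
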